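(* Let $R$ be an inp-minimal integral domain with maximal ideal $\mathfrak M$. If $R$ contains an infinite set $F$ such that $F-F\subseteq R^\times\cup\{0\}$, then $R$ is a valuation ring. In particular: (1) if $R/\mathfrak M$ is infinite then $R$ is a valuation ring; (2) if $R$ has an infinite subring which is a field then $R$ is a valuation ring.
   Context: Rings are commutative with identity. Inp-minimal: the theory of $R$ in the language of rings has burden $1$ (such a domain is local). A domain $R$ is a valuation ring if for every nonzero $x$ in its fraction field, $x\in R$ or $x^{-1}\in R$. *)

(* Defs.v *)
From HB Require Import structures.
From mathcomp Require Import all_boot all_algebra.
From mathcomp Require Import fraction.
Set Implicit Arguments. Unset Strict Implicit. Unset Printing Implicit Defensive.
Import GRing.Theory.
Local Open Scope ring_scope.

(* First-order formulas in the language of rings are [GRing.formula R]; the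
   object variable x is 'X_0 and the parameter tuple occupies 'X_1, 'X_2, ...
   So  R |= phi(x; a)  is  [GRing.holds (x :: a) phi]. *)
Definition sat1 (R : idomainType) (phi : GRing.formula R) (x : R) (a : seq R) : Prop :=
  GRing.holds (x :: a) phi.

Definition k_inconsistent (R : idomainType) (phi : GRing.formula R) (k n : nat)
    (a : nat -> seq R) : Prop :=
  forall s : seq nat, uniq s -> size s = k -> all (fun i => i < n)%N s ->
    ~ (exists x : R, forall i, i \in s -> sat1 phi x (a i)).

Definition inp_pattern2 (R : idomainType) (phi psi : GRing.formula R) (k n : nat) : Prop :=
  exists a b : nat -> seq R,
    [/\ k_inconsistent phi k n a, k_inconsistent psi k n b &
        forall i j, (i < n)%N -> (j < n)%N ->
          exists x : R, sat1 phi x (a i) /\ sat1 psi x (b j)].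

(* Th(R) has burden >= 2 (in the variable x), via compactness: there are
   formulas phi, psi and k such that R contains inp-patterns of depth 2
   of every finite width. *)
Definition burden_ge2 (R : idomainType) : Prop :=
  exists (phi psi : GRing.formula R) (k : nat), forall n, inp_pattern2 phi psi k n.

Definition infinite_pred (R : idomainType) (F : R -> Prop) : Prop :=
  forall s : seq R, exists x, F x /\ x \notin s.

Definition inp_minimal (R : idomainType) : Prop :=
  infinite_pred (fun _ : R => True) /\ ~ burden_ge2 R.

Definition valuation_ring (R : idomainType) : Prop :=
  forall x : {fraction R}, x != 0 ->
    (exists r : R, x = tofrac r) \/ (exists r : R, x^-1 = tofrac r).

Definition max_ideal (R : idomainType) : R -> Prop := fun r => r \isn't a GRing.unit.

Definition residue_field_infinite (R : idomainType) : Prop :=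
  forall s : seq R, exists x : R, forall y, y \in s -> ~ max_ideal (x - y).

Definition subfield_of (R : idomainType) (S : R -> Prop) : Prop :=
  [/\ S 0, S 1, (forall x y, S x -> S y -> S (x - y)),
      (forall x y, S x -> S y -> S (x * y)) &
      (forall x, S x -> x != 0 -> exists y, S y /\ x * y = 1)].

(* Main.v *)
Require Import Defs.
From HB Require Import structures.
From mathcomp Require Import all_boot all_algebra.
From mathcomp Require Import fraction generic_quotient.
From Stdlib Require Import Classical.
From mathcomp Require Import ring.
Import GRing.Theory.
Local Open Scope ring_scope.

Lemma frac_repr {R : idomainType} (x : {fraction R}) :
  exists a b : R, b != 0 /\ x * tofrac b = tofrac a.
Proof.
elim/quotW: x => r.
exists (\n_r), (\d_r); split; first exact: denom_ratioP.
unlock tofrac => /=.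
apply: etrans; first exact: (esym (FracField.pi_mul _ _)).
apply/eqmodP; rewrite /= FracField.equivfE /FracField.mulf.
rewrite !numden_Ratio ?mulr1 ?mul1r ?oner_neq0 ?denom_ratioP //.
by rewrite mulrC.
Qed.

Definition cosetf (R : idomainType) (a : R) : GRing.formula R :=
  ('exists 'X_2, 'X_0 == 'X_1 + (a%:T * 'X_2))%T.
Arguments cosetf {R}.

Lemma sat_cosetf (R : idomainType) (a x c : R) :
  sat1 (cosetf a) x [:: c] <-> exists y, x = c + a * y.
Proof. by rewrite /sat1 /cosetf /=. Qed.

Definition unit_rel (R : idomainType) := fun x y : R => (x - y) \is a GRing.unit.

Lemma pw_unit (R : idomainType) (s : seq R) i j :
  pairwise (@unit_rel R) s -> (i < size s)%N -> (j < size s)%N -> i != j ->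
  (nth 0 s i - nth 0 s j) \is a GRing.unit.
Proof.
move=> /(pairwiseP 0) H hi hj; rewrite neq_ltn => /orP [lt|lt].
  exact: H.
by rewrite -unitrN opprB; apply: H.
Qed.

Lemma inc_lemma (R : idomainType) (a b : R) (s : seq R) n :
  size s = n -> pairwise (@unit_rel R) s ->
  ~ (exists r, b = a * r) ->
  k_inconsistent (cosetf a) 2 n (fun i => [:: b * nth 0 s i]).
Proof.
move=> sz pw nba t ut st at_ [x Hx].
case: t ut st at_ Hx => [|i [|j [|? ?]]] //= ut _ at_ Hx.
have := Hx i; rewrite inE eqxx => /(_ isT) /sat_cosetf [y1 e1].
have := Hx j; rewrite !inE eqxx orbT => /(_ isT) /sat_cosetf [y2 e2].
move: ut; rewrite inE andbT => nij.
move: at_; rewrite andbT => /andP [hi hj].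
have U : (nth 0 s i - nth 0 s j) \is a GRing.unit.
  by apply: pw_unit => //; rewrite sz.
apply: nba; exists ((y2 - y1) * (nth 0 s i - nth 0 s j)^-1).
have E : b * (nth 0 s i - nth 0 s j) = a * (y2 - y1).
  have H : b * nth 0 s i + a * y1 = b * nth 0 s j + a * y2 by rewrite -e1 -e2.
  apply/eqP; rewrite -subr_eq0.
  have -> : b * (nth 0 s i - nth 0 s j) - a * (y2 - y1) =
     (b * nth 0 s i + a * y1) - (b * nth 0 s j + a * y2) by ring.
  by rewrite H subrr.
by rewrite mulrA -E mulrK.
Qed.

Lemma key (R : idomainType) : ~ burden_ge2 R ->
  (forall n, exists s : seq R, size s = n /\ pairwise (@unit_rel R) s) ->
  valuation_ring R.
Proof.
move=> hb hF x x0.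
have [a [b [b0 e]]] := frac_repr x.
have b0' : tofrac b != 0 by rewrite tofrac_eq0.
case: (classic (exists r, a = b * r)) => [[r ear]|nab].
  left; exists r; apply: (mulIf b0').
  by rewrite e ear tofracM mulrC.
case: (classic (exists r, b = a * r)) => [[r eba]|nba].
  right; exists r.
  have a0 : tofrac a != 0.
    by apply: contraNneq x0 => a0; rewrite -(mulfK b0' x) e a0 mul0r.
  have hxr : x * tofrac r = 1.
    apply: (mulIf a0); rewrite mul1r -mulrA [tofrac r * _]mulrC -tofracM -eba.
    exact: e.
  by rewrite -[LHS]mulr1 -hxr mulrA mulVf // mul1r.
exfalso; apply: hb.
exists (cosetf a), (cosetf b), 2%N => n.
have [s [sz pw]] := hF n.
exists (fun i => [:: b * nth 0 s i]), (fun j => [:: a * nth 0 s j]); split.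
- exact: inc_lemma.
- exact: inc_lemma.
- move=> i j _ _; exists (b * nth 0 s i + a * nth 0 s j); split; apply/sat_cosetf.
    by exists (nth 0 s j).
  by exists (nth 0 s i); rewrite addrC.
Qed.

Lemma from_F (R : idomainType) (F : R -> Prop) : infinite_pred F ->
  (forall x y, F x -> F y -> x - y \is a GRing.unit \/ x - y = 0) ->
  forall n, exists s : seq R, size s = n /\ pairwise (@unit_rel R) s.
Proof.
move=> hinf hu n.
suff: exists s : seq R, [/\ size s = n, pairwise (@unit_rel R) s & forall y, y \in s -> F y].
  by case=> s [? ? _]; exists s.
elim: n => [|n [s [sz pw hs]]]; first by exists [::].
have [x [Fx xs]] := hinf s.
exists (x :: s); split => //=.
- by rewrite sz.
- rewrite pw andbT; apply/allP => y ys.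
  case: (hu x y Fx (hs y ys)) => // /eqP; rewrite subr_eq0 => /eqP exy.
  by move: xs; rewrite exy ys.
- by move=> y; rewrite inE => /orP [/eqP ->|/hs].
Qed.

Theorem mainTheorem8 (R : idomainType) (hR : inp_minimal R) :
  [/\ (forall F : R -> Prop, infinite_pred F ->
         (forall x y, F x -> F y -> x - y \is a GRing.unit \/ x - y = 0) ->
         valuation_ring R),
      (residue_field_infinite R -> valuation_ring R) &
      (forall S : R -> Prop, subfield_of S -> infinite_pred S -> valuation_ring R)].
Proof.
case: hR => _ hb.
have P1 : forall F : R -> Prop, infinite_pred F ->
         (forall x y, F x -> F y -> x - y \is a GRing.unit \/ x - y = 0) ->
         valuation_ring R.
  by move=> F hi hu; apply: key => //; apply: from_F hi hu.
split => //.
- move=> hres; apply: key => // n.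
  elim: n => [|n [s [sz pw]]]; first by exists [::].
  have [x hx] := hres s.
  exists (x :: s); split; first by rewrite /= sz.
  rewrite /= pw andbT; apply/allP => y ys.
  by have := hx y ys; rewrite /max_ideal /unit_rel => /negP; rewrite negbK.
- move=> S [S0 S1 SB SM SI] hi; apply: (P1 S hi) => x y Sx Sy.
  case: (eqVneq (x - y) 0) => [->|nz]; [by right | left].
  have [z [_ hz]] := SI _ (SB _ _ Sx Sy) nz.
  by apply/unitrPr; exists z.
Qed.
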